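(* Let $\Omega$ be a region of $\mathcal{C}^*_{n,A}$ ($n\ge1$) and let $G_1(\Omega)$ be the graph on $[n]$ in which $\{i,j\}$ ($i\ne j$) is an edge iff $|x_i-x_j|<a_1$ for $\bm x\in\Omega$ (this does not depend on $\bm x\in\Omega$). Then $\mathrm{level}(\Omega)$ equals the number of connected components of $G_1(\Omega)$.
   Context: Let $A=\{a_1,\dots,a_m\}$ with $a_1>\dots>a_m>0$; $\mathcal{C}^*_{n,A}$ is the arrangement in $\mathbb{R}^n$ of hyperplanes $x_i-x_j=a_k$ ($i\ne j$, $1\le k\le m$); regions are connected components of the complement. The level of $X\subseteq\mathbb{R}^n$ is the smallest integer $\ell\ge0$ such that there are a linear subspace $W$ of dimension $\ell$ and $r>0$ with $X\subseteq\{\bm x:\min_{\bm y\in W}\|\bm x-\bm y\|\le r\}$. ($G_1(\Omega)$ is the incomparability graph of the interval order on $[n]$ given by $i<j$ iff $[x_i-a_1,x_i]$ lies entirely left of $[x_j-a_1,x_j]$.) *)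

(* Defs.v *)
From HB Require Import structures.
From mathcomp Require Import all_boot all_order all_algebra.
From mathcomp Require Import all_classical all_reals all_analysis.
Import numFieldNormedType.Exports.
Set Implicit Arguments. Unset Strict Implicit. Unset Printing Implicit Defensive.
Import Order.TTheory GRing.Theory Num.Theory.
Local Open Scope classical_set_scope.
Local Open Scope ring_scope.

(* Points of R^n are row vectors 'rV[R]_n (with their canonical topology);
   coordinate i of x is x ord0 i.  The set A = {a_1 > ... > a_m} is given as
   a : 'I_m -> R, a_1 = a k0 with k0 the first index. *)

Definition arr_compl (R : realType) (n m : nat) (a : 'I_m -> R) : set 'rV[R]_n :=
  [set x | forall (i j : 'I_n) (k : 'I_m), i != j -> x ord0 i - x ord0 j != a k].

Definition is_region (R : realType) (n m : nat) (a : 'I_m -> R)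
  (Om : set 'rV[R]_n) : Prop :=
  exists2 x, arr_compl a x & Om = connected_component (arr_compl a) x.

Definition edist (R : realType) (n : nat) (x y : 'rV[R]_n) : R :=
  Num.sqrt (\sum_(i < n) (x ord0 i - y ord0 i) ^+ 2).

(* X lies within distance r of the linear subspace W (the row space of the
   matrix W): min_{y in W} ||x - y|| <= r for all x in X (the min is attained). *)
Definition within_tube (R : realType) (n : nat) (X : set 'rV[R]_n)
  (W : 'M[R]_n) (r : R) : Prop :=
  forall x, X x -> exists2 y : 'rV[R]_n, (y <= W)%MS & edist x y <= r.

Definition level_witness (R : realType) (n : nat) (X : set 'rV[R]_n) (l : nat) : Prop :=
  exists W : 'M[R]_n, \rank W = l /\ exists2 r : R, 0 < r & within_tube X W r.

Definition is_level (R : realType) (n : nat) (X : set 'rV[R]_n) (l : nat) : Prop :=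
  level_witness X l /\ forall l', level_witness X l' -> (l <= l')%N.

Definition G1 (R : realType) (n : nat) (a1 : R) (x : 'rV[R]_n) : rel 'I_n :=
  fun i j => (i != j) && (`|x ord0 i - x ord0 j| < a1).

(* Main.v *)
Require Import Defs.
From HB Require Import structures.
From mathcomp Require Import all_boot all_order all_algebra.
From mathcomp Require Import all_classical all_reals all_analysis.
From mathcomp Require Import lra.
Import numFieldNormedType.Exports.
Import Order.TTheory GRing.Theory Num.Theory.
Local Open Scope classical_set_scope.
Local Open Scope ring_scope.


Lemma connect_pres (T : finType) (e : rel T) (P : T -> bool) :
  (forall p q, e p q -> P p -> P q) -> forall u v, connect e u v -> P u -> P v.
Proof.
move=> H u v /connectP [p pth ->]; elim: p u pth => [|q p IH] u //= /andP [euq pq] Pu.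
exact: IH pq (H _ _ euq Pu).
Qed.

Lemma G1_sym {R : realType} {n} (a1 : R) (x : 'rV[R]_n) : symmetric (G1 a1 x).
Proof. by move=> i j; rewrite /G1 eq_sym distrC. Qed.

Lemma G1_adj {R : realType} {n} {a1 : R} {x : 'rV[R]_n} {i j} :
  i != j -> `|x ord0 i - x ord0 j| < a1 -> G1 a1 x i j.
Proof. by move=> ij h; rewrite /G1 ij h. Qed.

Lemma contig (R : realType) n (a1 : R) (x : 'rV[R]_n) r i j l :
  0 < a1 ->
  connect (G1 a1 x) r i -> connect (G1 a1 x) r l ->
  x ord0 i <= x ord0 j -> x ord0 j <= x ord0 l -> connect (G1 a1 x) r j.
Proof.
set e := G1 a1 x => a1p ri rl ij jl; apply: contraT => nrj.
have symc := sym_connect_sym (G1_sym a1 x).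
have step : forall p, connect e r p -> x ord0 p < x ord0 j -> e p j = false.
  by move=> p rp _; apply: contraNF nrj => epj; apply: connect_trans rp (connect1 epj).
have [eij|] := eqVneq (x ord0 i) (x ord0 j).
  have [ij0|nij] := eqVneq i j; first by rewrite -ij0 ri in nrj.
  by case/negP: nrj; apply: connect_trans ri (connect1 _); apply: G1_adj => //; rewrite eij subrr normr0.
rewrite neq_lt => /orP [] hij; last by move: ij; rewrite leNgt hij.
pose P := fun p => connect e r p && (x ord0 p < x ord0 j).
have il : connect e i l by apply: connect_trans _ rl; rewrite symc.
have H : forall p q, e p q -> P p -> P q.
  move=> p q epq /andP [rp pj]; have rq : connect e r q by apply: connect_trans rp (connect1 epq).
  rewrite /P rq /=; rewrite ltNge; apply/negP => jq.
  move: epq; rewrite /e /G1 => /andP [_ hpq].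
  have := step p rp pj; rewrite /e /G1.
  have -> : (p != j) by apply: contraTneq pj => ->; rewrite ltxx.
  rewrite /=; move: hpq; rewrite !ltr_norml => /andP [h1 h2] /negP; apply; apply/andP; split; lra.
have := @connect_pres _ e P H i l il; rewrite /P ri hij rl /= => /(_ isT).
by rewrite ltNge jl.
Qed.




Lemma conn_sep {R : realType} {S : set R} {p q c : R} :
  connected S -> S p -> S q -> ~ S c -> (p < c) = (q < c).
Proof.
move=> /connected_intervalP iS Sp Sq Sc.
have key : forall u v, S u -> S v -> u < c -> c <= v -> False.
  move=> u v Su Sv uc cv; apply: Sc; apply: (iS u v) => //.
  by rewrite (ltW uc) cv.
case: (ltP p c) => pc; case: (ltP q c) => qc //.
- by case: (key _ _ Sp Sq pc qc).
- by case: (key _ _ Sq Sp qc pc).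
Qed.


Lemma G1_inv (R : realType) n m (a : 'I_m -> R) (C : set 'rV[R]_n) (k0 : 'I_m) :
  connected C -> C `<=` arr_compl a -> forall x y, C x -> C y ->
  forall i j, G1 (a k0) y i j = G1 (a k0) x i j.
Proof.
move=> cC CA x y Cx Cy i j; rewrite /G1; case: (i =P j) => //= /eqP ij.
pose f := fun z : 'rV[R]_n => z ord0 i - z ord0 j.
have cS : connected (f @` C).
  apply: connected_continuous_connected => //; apply: continuous_subspaceT.
  by move=> z; apply: continuousB; apply: coord_continuous.
have Na : ~ (f @` C) (a k0).
  by move=> [z Cz fz]; move: (CA z Cz i j k0 ij); rewrite -/(f z) fz eqxx.
have Nma : ~ (f @` C) (- a k0).
  move=> [z Cz fz]; have := CA z Cz j i k0; rewrite eq_sym => /(_ ij).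
  by rewrite -opprB -/(f z) fz opprK eqxx.
have Sx : (f @` C) (f x) by exists x.
have Sy : (f @` C) (f y) by exists y.
have e1 := conn_sep cS Sx Sy Na.
have e2 := conn_sep cS Sx Sy Nma.
have key : forall d, (f @` C) d -> (`|d| < a k0) = ~~ (d < - a k0) && (d < a k0).
  move=> d Sd; rewrite ltr_norml -leNgt le_eqVlt; congr (_ && _).
  by case: eqP => // dE; case: Nma; rewrite dE.
by rewrite -/(f y) -/(f x) (key _ Sx) (key _ Sy) e1 e2.
Qed.

Lemma shift_in (R : realType) n m (a : 'I_m -> R) (x v : 'rV[R]_n) s :
  0 <= s -> (forall t, 0 <= t -> arr_compl a (x + t *: v)) ->
  connected_component (arr_compl a) x (x + s *: v).
Proof.
move=> s0 Hc.
apply: (@connected_component_max _ _ ((fun t => x + t *: v) @` `[0, s])).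
- exists 0; last by rewrite scale0r addr0.
  by rewrite /= in_itv /= lexx s0.
- move=> p [t]; rewrite /= in_itv /= => /andP [t0 _] <-; exact: Hc.
- apply: connected_continuous_connected; first exact: segment_connected.
  apply: continuous_subspaceT => t.
  have H := @continuousD R ('rV[R]_n) R (cst x) ( *:%R^~ v) t (cvg_cst _)
    (@scalel_continuous R _ v t).
  exact: H.
- by exists s => //; rewrite /= in_itv /= s0 lexx.
Qed.


Lemma coord_le_edist (R : realType) n (p q : 'rV[R]_n) i :
  `|p ord0 i - q ord0 i| <= Defs.edist p q.
Proof.
rewrite /Defs.edist -sqrtr_sqr ler_wsqrtr // (bigD1 i) //= lerDl.
by apply: sumr_ge0 => j _; rewrite sqr_ge0.
Qed.

Lemma tube_sub (R : realType) n (Om : set 'rV[R]_n) (W : 'M[R]_n) r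
  (x u : 'rV[R]_n) :
  within_tube Om W r -> (forall s, 0 <= s -> Om (x + s *: u)) -> (u <= W)%MS.
Proof.
move=> hT hs; rewrite submxE; apply/eqP/matrixP => i j; rewrite !mxE.
rewrite (ord1 i); set L := cokermx W.
pose K := \sum_(l < n) `|L l j|.
have bnd : forall p, Om p -> `|(p *m L) ord0 j| <= r * K.
  move=> p /hT [y yW hy]; have yL : y *m L = 0 by apply/eqP; rewrite -submxE.
  have -> : p *m L = (p - y) *m L by rewrite mulmxBl yL subr0.
  rewrite mxE; apply: le_trans (ler_norm_sum _ _ _) _.
  rewrite /K mulr_sumr; apply: ler_sum => l _.
  rewrite normrM ler_wpM2r //; apply: le_trans _ hy.
  by rewrite !mxE coord_le_edist.
have -> : \sum_j0 u 0 j0 * L j0 j = (u *m L) ord0 j by rewrite mxE.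
set c := (u *m L) ord0 j; apply/eqP; apply: contraT => c0.
have cp : 0 < `|c| by rewrite normr_gt0.
pose s := (r * K + `|(x *m L) ord0 j| + 1) / `|c|.
have hr : 0 <= r * K.
  apply: le_trans (bnd _ (hs 0 (lexx 0))); exact: normr_ge0.
have s0 : 0 <= s by rewrite divr_ge0 // addr_ge0 // addr_ge0.
set d := (x *m L) ord0 j.
have := bnd _ (hs s s0); rewrite mulmxDl -scalemxAl mxE [X in _ + X]mxE -/c -/d.
have sc : `|s * c| = r * K + `|d| + 1.
  by rewrite normrM ger0_norm // /s -mulrA mulVf ?mulr1 // gt_eqF.
have h : `|s * c| <= `|d + s * c| + `|d|.
  have e : s * c = (d + s * c) - d by rewrite addrAC subrr add0r.
  by rewrite {1}e; exact: ler_normB.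
rewrite sc in h => h2; lra.
Qed.


Definition indv {R : realType} {n} (S : pred 'I_n) : 'rV[R]_n :=
  \row_j (if S j then 1 else 0).

Lemma shift_compl {R : realType} {n m} (a : 'I_m -> R) (a1 : R) (x : 'rV[R]_n)
  (S : pred 'I_n) t :
  arr_compl a x -> (forall k, 0 < a k /\ a k <= a1) ->
  (forall j l, S j -> ~~ S l -> a1 < x ord0 j - x ord0 l) -> 0 <= t ->
  arr_compl a (x + t *: indv S).
Proof.
move=> hx ha hS t0 i j k ij; rewrite !mxE; have [h1 h2] := ha k.
case Si: (S i); case Sj: (S j); rewrite ?mulr1 ?mulr0 ?addr0.
- by have := hx i j k ij; apply: contra => /eqP h; apply/eqP; lra.
- by have := hS i j Si (negbT Sj); apply: contraTneq => h; lra.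
- by have := hS j i Sj (negbT Si); apply: contraTneq => h; lra.
- exact: hx.
Qed.

Definition vS {R : realType} {n} (a1 : R) (x : 'rV[R]_n) r : pred 'I_n :=
  fun j => [exists i, connect (G1 a1 x) r i && (x ord0 i <= x ord0 j)].
Definition wS {R : realType} {n} (a1 : R) (x : 'rV[R]_n) r : pred 'I_n :=
  fun j => [forall i, connect (G1 a1 x) r i ==> (x ord0 i < x ord0 j)].

Lemma gap_lemma {R : realType} {n m} (a : 'I_m -> R) k0 (x : 'rV[R]_n) j l :
  arr_compl a x -> x ord0 l < x ord0 j -> ~~ (x ord0 j - x ord0 l < a k0) ->
  a k0 < x ord0 j - x ord0 l.
Proof.
move=> hx lj; rewrite -leNgt le_eqVlt => /orP [/eqP h|//].
have jl : j != l by apply: contraTneq lj => ->; rewrite ltxx.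
by move: (hx j l k0 jl); rewrite h eqxx.
Qed.

Lemma vS_sep {R : realType} {n m} (a : 'I_m -> R) k0 (x : 'rV[R]_n) r :
  arr_compl a x -> forall j l, vS (a k0) x r j -> ~~ vS (a k0) x r l ->
  a k0 < x ord0 j - x ord0 l.
Proof.
move=> hx j l /existsP [i /andP [ri ij]] /existsPn nl.
have li : x ord0 l < x ord0 i by move: (nl i); rewrite ri /= -ltNge.
apply: gap_lemma (lt_le_trans li ij) _ => //; apply/negP => h.
have il : i != l by apply: contraTneq li => ->; rewrite ltxx.
have : connect (G1 (a k0) x) r l.
  apply: connect_trans ri (connect1 _); rewrite /G1 il /=.
  by rewrite ltr_norml; apply/andP; split; lra.
by move=> rl; move: (nl l); rewrite rl lexx.
Qed.

Lemma wS_sep {R : realType} {n m} (a : 'I_m -> R) k0 (x : 'rV[R]_n) r :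
  arr_compl a x -> forall j l, wS (a k0) x r j -> ~~ wS (a k0) x r l ->
  a k0 < x ord0 j - x ord0 l.
Proof.
move=> hx j l /forallP hj /forallPn [i]; rewrite negb_imply => /andP [ri].
rewrite -leNgt => li.
have ij : x ord0 i < x ord0 j by move: (hj i); rewrite ri.
apply: gap_lemma (le_lt_trans li ij) _ => //; apply/negP => h.
have ji : j != i by apply: contraTneq ij => ->; rewrite ltxx.
have : connect (G1 (a k0) x) r j.
  apply: connect_trans ri (connect1 _); rewrite G1_sym /G1 ji /=.
  by rewrite ltr_norml; apply/andP; split; lra.
by move=> rj; move: (hj j); rewrite rj ltxx.
Qed.

Lemma ind_diff {R : realType} {n} (a1 : R) (x : 'rV[R]_n) r : 0 < a1 ->
  indv (connect (G1 a1 x) r) = indv (vS a1 x r) - indv (wS a1 x r) :> 'rV[R]_n.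
Proof.
move=> a1p; apply/rowP => j; rewrite !mxE.
case rj: (connect (G1 a1 x) r j).
  have -> : vS a1 x r j by apply/existsP; exists j; rewrite rj lexx.
  have -> : wS a1 x r j = false.
    by apply/negP => /forallP /(_ j); rewrite rj ltxx.
  by rewrite subr0.
case v: (vS a1 x r j); case w: (wS a1 x r j); rewrite ?subrr ?subr0 //.
- move/existsP: v => [i /andP [ri ij]]; move/forallPn: (negbT w) => [l].
  rewrite negb_imply -leNgt => /andP [rl jl].
  by rewrite (@contig _ _ a1 x r i j l a1p ri rl ij jl) in rj.
- move/forallP: w => /(_ r); rewrite connect0 /= => h.
  by move/existsPn: (negbT v) => /(_ r); rewrite connect0 /= (ltW h).
Qed.


Lemma path_bound {R : realType} {n} (a1 : R) (y : 'rV[R]_n) (e : rel 'I_n) :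
  (forall i j, e i j -> `|y ord0 i - y ord0 j| < a1) ->
  forall p u, path e u p -> `|y ord0 u - y ord0 (last u p)| <= (size p)%:R * a1.
Proof.
move=> he; elim=> [|q p IH] u /=; first by rewrite subrr normr0 mul0r.
move=> /andP [euq pq]; apply: le_trans (ler_distD (y ord0 q) _ _) _.
rewrite -[(size p).+1]add1n natrD mulrDl mul1r; apply: lerD; first exact/ltW/he.
exact: IH.
Qed.

Lemma connect_bound {R : realType} {n} (a1 : R) (y : 'rV[R]_n) i j :
  0 < a1 -> connect (G1 a1 y) i j -> `|y ord0 i - y ord0 j| <= n%:R * a1.
Proof.
move=> a1p /connectP [p pth ->]; case/shortenP: pth => p' pth' up' _.
have he : forall i' j', G1 a1 y i' j' -> `|y ord0 i' - y ord0 j'| < a1.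
  by move=> i' j' /andP [_ h].
apply: le_trans (@path_bound _ _ a1 y _ he _ _ pth') _.
rewrite ler_wpM2r ?ltW // ltr_nat.
have := max_card (mem (i :: p')); rewrite card_ord.
by move/card_uniqP: up' => ->.
Qed.


Theorem theorem3p4 (R : realType) (n m : nat) (a : 'I_m.+1 -> R)
  (hn : (1 <= n)%N)
  (a_pos : forall k, 0 < a k)
  (a_decr : forall k l : 'I_m.+1, (k < l)%N -> a l < a k)
  (Om : set 'rV[R]_n) (hOm : is_region a Om)
  (x : 'rV[R]_n) (hx : Om x) :
  is_level Om (n_comp (G1 (a ord0) x) 'I_n).
Proof.
set a1 := a ord0; set e := G1 a1 x.
have a1p : 0 < a1 := a_pos ord0.
have ha : forall k, 0 < a k /\ a k <= a1.
  move=> k; split => //; have [k0|kp] := posnP k.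
    by rewrite /a1 (_ : k = ord0) //; apply/val_inj.
  exact/ltW/a_decr.
have [x0 hx0 Omdef] := hOm.
have Omx : Om = connected_component (arr_compl a) x.
  by rewrite Omdef; apply: same_connected_component; rewrite -Omdef.
have OmA : Om `<=` arr_compl a by rewrite Omx; apply: connected_component_sub.
have cOm : connected Om by rewrite Omx; apply: component_connected.
have Ac : arr_compl a x := OmA x hx.
have Ginv : forall y, Om y -> forall i j, G1 a1 y i j = e i j.
  by move=> y hy i j; exact: (@G1_inv _ _ _ a Om ord0 cOm OmA x y hx hy i j).
have symc : connect_sym e := sym_connect_sym (G1_sym a1 x).
have -> : n_comp e 'I_n = #|roots e|.
  by apply: eq_card => i; rewrite !inE andbT.
set N := #|roots e|.
pose rt (c : 'I_N) : 'I_n := enum_val c.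
have rtroot : forall c, fingraph.root e (rt c) = rt c.
  by move=> c; apply/eqP; exact: (enum_valP c).
have conn_rt : forall c c', connect e (rt c) (rt c') = (c == c').
  move=> c c'; rewrite -(root_connect symc) !rtroot.
  by apply/eqP/eqP => [/enum_val_inj|->].
pose M : 'M[R]_(N, n) := \matrix_(c, j) (if connect e (rt c) j then 1 else 0).
have rkM : \rank M = N.
  apply/eqP; change (row_free M); rewrite -kermx_eq0 -submx0; apply/row_subP => c; rewrite submx0.
  set u := row c (kermx M).
  have uM : u *m M = 0 by apply/sub_kermxP; exact: row_sub.
  apply/eqP/rowP => c'; rewrite [RHS]mxE.
  have := congr1 (fun v : 'rV[R]_n => v ord0 (rt c')) uM.
  rewrite /= [RHS]mxE mxE (bigD1 c') //= big1 ?addr0.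
    by rewrite [M _ _]mxE conn_rt eqxx mulr1.
  by move=> c'' ne; rewrite [M _ _]mxE conn_rt (negbTE ne) mulr0.
have lower : forall W r, 0 < r -> within_tube Om W r -> (N <= \rank W)%N.
  move=> W r r0 hT; rewrite -{1}rkM; apply: mxrankS; apply/row_subP => c.
  have -> : row c M = indv (connect e (rt c)).
    by apply/rowP => j; rewrite !mxE.
  rewrite ind_diff //; apply: addmx_sub; last rewrite eqmx_opp.
  - apply: (@tube_sub R n Om W r x _ hT) => s s0; rewrite Omx; apply: shift_in => // t t0.
    apply: (@shift_compl R n m.+1 a a1 x _ t Ac ha _ t0); exact: vS_sep.
  - apply: (@tube_sub R n Om W r x _ hT) => s s0; rewrite Omx; apply: shift_in => // t t0.
    apply: (@shift_compl R n m.+1 a a1 x _ t Ac ha _ t0); exact: wS_sep.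
pose P : 'M[R]_(n, N) := \matrix_(i, c) (if rt c == fingraph.root e i then 1 else 0).
pose W := P *m M.
pose B := n%:R * a1.
have B0 : 0 <= B by rewrite /B mulr_ge0 // ltW.
pose r := n%:R * B + 1.
have r0 : 0 < r by rewrite /r ltr_wpDl // mulr_ge0.
have tube : within_tube Om W r.
  move=> y hy; exists (\row_j y ord0 (fingraph.root e j)).
    pose E : 'rV[R]_n := \row_i (if roots e i then y ord0 i else 0).
    have EP : E *m P = \row_c y ord0 (rt c).
      apply/rowP => c; rewrite !mxE (bigD1 (rt c)) //= big1 ?addr0.
        by rewrite !mxE rtroot eqxx mulr1 (_ : roots e (rt c)) //; exact: (enum_valP c).
      move=> i ne; rewrite !mxE; case ri: (roots e i); last by rewrite mul0r.
      by rewrite (eqP ri) eq_sym (negbTE ne) mulr0.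
    have -> : \row_j y ord0 (fingraph.root e j) = E *m W.
      rewrite /W mulmxA EP; apply/rowP => j; rewrite !mxE.
      have rj : fingraph.root e j \in roots e by exact: (roots_root symc).
      pose c0 := enum_rank_in rj (fingraph.root e j).
      have rc0 : rt c0 = fingraph.root e j by exact: enum_rankK_in.
      rewrite (bigD1 c0) //= big1 ?addr0.
        rewrite !mxE rc0 (_ : connect e _ j) ?mulr1 //.
        by rewrite symc connect_root.
      move=> c ne; rewrite !mxE; case cj: (connect e (rt c) j); last by rewrite mulr0.
      move/(fingraph.rootP symc): cj; rewrite rtroot -rc0 => /enum_val_inj ce.
      by rewrite ce eqxx in ne.
    exact: submxMl.
  have hd : forall j, `|y ord0 j - y ord0 (fingraph.root e j)| <= B.
    move=> j; apply: connect_bound => //.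
    have -> : G1 a1 y = e by apply/funext => i; apply/funext => l; exact: Ginv.
    exact: connect_root.
  rewrite /Defs.edist.
  have Hs : \sum_(i < n) (y ord0 i - (\row_j y ord0 (fingraph.root e j)) ord0 i) ^+ 2 <= r ^+ 2.
    apply: le_trans (_ : \sum_(i < n) B ^+ 2 <= _).
      apply: ler_sum => i _; rewrite mxE.
      have := hd i; move: (_ - _) => d hdB.
      by rewrite -real_normK ?num_real // !expr2; apply: ler_pM.
    rewrite sumr_const card_ord -mulr_natl /r.
    have n1 : 1 <= n%:R :> R by rewrite ler1n.
    have h3 : 0 <= n%:R - 1 :> R by rewrite subr_ge0.
    have := mulr_ge0 (mulr_ge0 (ler0n R n) (sqr_ge0 B)) h3; nra.
  rewrite -(ger0_norm (ltW r0)) -sqrtr_sqr; exact: (ler_wsqrtr Hs).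
split.
  exists W; split; last by exists r.
  apply/eqP; rewrite eqn_leq (lower W r r0 tube) andbT.
  apply: leq_trans (mxrankM_maxr P M) _; rewrite rkM.
  exact: leqnn.
by move=> l [W' [<- [r' r'0 hT]]]; exact: (lower W' r' r'0 hT).
Qed.
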